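(* Let $m,n\ge1$ and $Z\subset[1,m]\times[1,n]$. Let $R=\mathbb{C}[x_{ij}:(i,j)\in([1,m]\times[1,n])\setminus Z]$ and let $X$ be the $m\times n$ matrix whose $(i,j)$-entry is $x_{ij}$ if $(i,j)\notin Z$ and $0$ if $(i,j)\in Z$. Let $\mathcal{G}_2(Z)\subset R$ be the set of $2\times2$ minors of $X$, and $I_2(Z)$ the ideal they generate. Then for every total order on the variables of $R$, $\mathcal{G}_2(Z)$ is a Gröbner basis of $I_2(Z)$ with respect to the degree reverse lexicographic order induced by that total order.
   Context: Degree revlex order (for variables ordered $x_1>\dots>x_N$): $x^a>x^b$ if $\sum a_i>\sum b_i$, or the degrees are equal and the rightmost nonzero entry of $a-b$ is negative. A finite generating set $G$ of $I$ is a Gröbner basis if the initial ideal of $I$ is generated by the initial monomials of elements of $G$. *)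

(* Defs.v *)
From HB Require Import structures.
From mathcomp Require Import all_boot all_algebra.
From mathcomp Require Import Rstruct complex.
From mathcomp Require Import mpoly.
From Stdlib Require Rdefinitions.

Set Implicit Arguments.
Unset Strict Implicit.
Unset Printing Implicit Defensive.

Import GRing.Theory.
Local Open Scope ring_scope.

Definition CC : fieldType := complex.complex Rdefinitions.R.

(* Variables of R = C[x_ij : (i,j) not in Z] are indexed by 'I_(nvars Z):
   the k-th variable is x_p where p is the k-th element of the complement of Z. *)
Definition nvars (m n : nat) (Z : {set 'I_m * 'I_n}) : nat := #|~: Z|.

Definition Rpoly (m n : nat) (Z : {set 'I_m * 'I_n}) := {mpoly CC[nvars Z]}.

Definition Xentry (m n : nat) (Z : {set 'I_m * 'I_n}) (i : 'I_m) (j : 'I_n)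
  : Rpoly Z :=
  if (i, j) \in Z then 0
  else match (insub (index (i, j) (enum (~: Z))) : option 'I_(nvars Z)) with
       | Some k => 'X_k
       | None => 0
       end.

Definition minors2 (m n : nat) (Z : {set 'I_m * 'I_n}) (f : Rpoly Z) : Prop :=
  exists (i1 i2 : 'I_m) (j1 j2 : 'I_n),
    (i1 < i2)%N /\ (j1 < j2)%N /\
    f = Xentry Z i1 j1 * Xentry Z i2 j2 - Xentry Z i1 j2 * Xentry Z i2 j1.

Definition ideal_gen (N : nat) (S : {mpoly CC[N]} -> Prop) (f : {mpoly CC[N]})
  : Prop :=
  exists s : seq ({mpoly CC[N]} * {mpoly CC[N]}),
    (forall c, c \in s -> S c.2) /\ f = \sum_(c <- s) c.1 * c.2.

Definition strict_total (N : nat) (lt : rel 'I_N) : Prop :=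
  [/\ forall v, ~~ lt v v,
      forall u v w, lt u v -> lt v w -> lt u w
    & forall v w, v != w -> lt v w || lt w v].

(* Degree revlex order induced by lt: [degrevlex lt a b] means x^a > x^b:
   deg a > deg b, or the degrees are equal and the "rightmost" (i.e. smallest
   for lt) variable v at which a and b differ has a v < b v. *)
Definition degrevlex (N : nat) (lt : rel 'I_N) (a b : 'X_{1..N}) : Prop :=
  (mdeg b < mdeg a)%N \/
  (mdeg a = mdeg b /\
   exists v : 'I_N, (a v < b v)%N /\ (forall w, lt w v -> a w = b w)).

Definition is_initial (N : nat) (gt : 'X_{1..N} -> 'X_{1..N} -> Prop)
  (f : {mpoly CC[N]}) (mon : 'X_{1..N}) : Prop :=
  mon \in msupp f /\ (forall m', m' \in msupp f -> m' != mon -> gt mon m').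

Definition initial_monomials (N : nat) (gt : 'X_{1..N} -> 'X_{1..N} -> Prop)
  (S : {mpoly CC[N]} -> Prop) (g : {mpoly CC[N]}) : Prop :=
  exists f mon, S f /\ is_initial gt f mon /\ g = 'X_[mon].

Definition initial_ideal (N : nat) (gt : 'X_{1..N} -> 'X_{1..N} -> Prop)
  (I : {mpoly CC[N]} -> Prop) : {mpoly CC[N]} -> Prop :=
  ideal_gen (initial_monomials gt I).

Definition is_groebner (N : nat) (gt : 'X_{1..N} -> 'X_{1..N} -> Prop)
  (G I : {mpoly CC[N]} -> Prop) : Prop :=
  forall h, initial_ideal gt I h <-> ideal_gen (initial_monomials gt G) h.

Arguments Xentry {m n} Z i j.
Arguments minors2 {m n} Z f.
Arguments nvars {m n} Z.

(* Main.v *)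
Require Import Defs.
From HB Require Import structures.
From mathcomp Require Import all_boot all_algebra.
From mathcomp Require Import Rstruct complex.
From mathcomp Require Import mpoly.
From Stdlib Require Import Classical.
From mathcomp Require Import zify.

Set Implicit Arguments.
Unset Strict Implicit.
Unset Printing Implicit Defensive.
Import GRing.Theory.
Local Open Scope ring_scope.

Lemma ideal_gen_sum (N : nat) (S : {mpoly CC[N]} -> Prop) (s : seq ({mpoly CC[N]} * {mpoly CC[N]})) :
  (forall c, c \in s -> ideal_gen S c.2) -> ideal_gen S (\sum_(c <- s) c.1 * c.2).
Proof.
elim: s => [|c s IH] hs; first by exists [::]; split => //; rewrite !big_nil.
have [t [ht e]] := hs c (mem_head _ _).
have [t' [ht' e']] : ideal_gen S (\sum_(c <- s) c.1 * c.2) by apply: IH => d hd; apply: hs; rewrite inE hd orbT.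

exists ([seq (c.1 * d.1, d.2) | d <- t] ++ t'); split.
  move=> d; rewrite mem_cat => /orP [/mapP [d' hd' ->]|hd] /=; [exact: ht|exact: ht'].
rewrite big_cons e e' big_cat big_map /= big_distrr /=; congr (_ + _).
by apply: eq_bigr => d _; rewrite mulrA.
Qed.

Section S.
Variables (m n : nat) (hm : (0 < m)%N) (hn : (0 < n)%N) (Z : {set 'I_m * 'I_n}).
Local Notation N := (nvars Z).

Definition c0 : 'I_m * 'I_n := (Ordinal hm, Ordinal hn).
Definition cell (k : 'I_N) := nth c0 (enum (~: Z)) k.

Lemma size_enumZ : size (enum (~: Z)) = N.
Proof. by rewrite /nvars cardE. Qed.

Lemma cell_inj : injective cell.
Proof.
move=> k1 k2 /eqP; rewrite /cell nth_uniq ?enum_uniq ?size_enumZ //.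
by move=> /eqP h; apply: val_inj.
Qed.

Lemma cell_notZ k : cell k \notin Z.
Proof.
have : cell k \in enum (~: Z) by rewrite mem_nth // size_enumZ.
by rewrite mem_enum in_setC.
Qed.

Lemma Xe_cell k : Xentry Z (cell k).1 (cell k).2 = 'X_k.
Proof.
rewrite /Xentry -surjective_pairing (negbTE (cell_notZ k)).
rewrite /cell index_uniq ?enum_uniq ?size_enumZ //.
by rewrite valK.
Qed.

Lemma Xe_Z (p : 'I_m * 'I_n) : p \in Z -> Xentry Z p.1 p.2 = 0.
Proof. by rewrite /Xentry -surjective_pairing => ->. Qed.

Lemma Xe_ex (p : 'I_m * 'I_n) : p \notin Z -> exists k, cell k = p.
Proof.
move=> h.
have hi : (index p (enum (~: Z)) < N)%N.
  by rewrite -size_enumZ index_mem mem_enum in_setC.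
exists (Ordinal hi); rewrite /cell /= nth_index //.
by rewrite mem_enum in_setC.
Qed.
Variable lt : rel 'I_N.
Hypothesis Hlt : strict_total lt.

Lemma lt_irr v : ~~ lt v v. Proof. by case: Hlt. Qed.
Lemma lt_trans u v w : lt u v -> lt v w -> lt u w. Proof. by case: Hlt => _ h _; apply: h. Qed.
Lemma lt_tot v w : v != w -> lt v w || lt w v. Proof. by case: Hlt => _ _ h; apply: h. Qed.

Definition rk (k : 'I_N) := #|[set w | lt w k]|.
Lemma rk_lt w k : lt w k -> (rk w < rk k)%N.
Proof.
move=> h; apply: proper_card; apply/properP; split.
  by apply/subsetP => u; rewrite !inE => hu; apply: lt_trans hu h.
by exists w; rewrite !inE ?h ?(negbTE (lt_irr w)).
Qed.

Definition rsum (M : 'X_{1..N}) i := (\sum_(k : 'I_N | (cell k).1 == i) M k)%N.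
Definition csum (M : 'X_{1..N}) j := (\sum_(k : 'I_N | (cell k).2 == j) M k)%N.

Definition std (mon : 'X_{1..N}) := forall a b : 'I_N,
  (0 < mon a)%N -> (0 < mon b)%N -> (cell a).1 != (cell b).1 -> (cell a).2 != (cell b).2 ->
  [/\ ((cell a).1, (cell b).2) \notin Z, ((cell b).1, (cell a).2) \notin Z &
  forall k1 k2, cell k1 = ((cell a).1, (cell b).2) -> cell k2 = ((cell b).1,(cell a).2) ->
     (lt a k1 && lt a k2) || (lt b k1 && lt b k2)].

Lemma sum_pos (P : pred 'I_N) (F : 'I_N -> nat) :
  (0 < \sum_(k | P k) F k)%N -> exists k, P k /\ (0 < F k)%N.
Proof.
move=> h; apply: NNPP => hneg; move: h; rewrite big1 // => k Pk.
apply/eqP; rewrite -leqn0 leqNgt; apply/negP => hF; apply: hneg; by exists k.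
Qed.

Lemma cell_eq a b : (cell a).1 = (cell b).1 -> (cell a).2 = (cell b).2 -> a = b.
Proof. by move=> h1 h2; apply: cell_inj; rewrite [cell a]surjective_pairing h1 h2 -surjective_pairing. Qed.

Lemma good mon i j : std mon -> (0 < rsum mon i)%N -> (0 < csum mon j)%N -> (i, j) \notin Z.
Proof.
move=> hs /sum_pos [a [/eqP ha pa]] /sum_pos [b [/eqP hb pb]].
have [haj|haj] := eqVneq (cell a).2 j.
  by have := cell_notZ a; rewrite [cell a]surjective_pairing ha haj.
have [hbi|hbi] := eqVneq (cell b).1 i.
  by have := cell_notZ b; rewrite [cell b]surjective_pairing hb hbi.
have h1 : (cell a).1 != (cell b).1 by rewrite ha eq_sym.
have h2 : (cell a).2 != (cell b).2 by rewrite hb.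
have [] := hs a b pa pb h1 h2.
by rewrite ha hb.
Qed.

Lemma minimal (mon M : 'X_{1..N}) : std mon ->
  (forall i, rsum M i = rsum mon i) -> (forall j, csum M j = csum mon j) ->
  M != mon -> exists v, (M v < mon v)%N /\ forall w, lt w v -> M w = mon w.
Proof.
move=> hs hr hc hne.
have [w0 hw0] : exists w, M w != mon w.
  apply: NNPP => hneg; move/eqP: hne; apply; apply/mnmP => w.
  by apply/eqP; apply: NNPP => h; apply: hneg; exists w; apply/negP.
case: (@arg_minnP _ w0 (fun w => M w != mon w) rk hw0) => v hv hmin.
have hbelow : forall w, lt w v -> M w = mon w.
  move=> w hw; apply/eqP; apply: NNPP => /negP h.
  by have := hmin w h; rewrite leqNgt (rk_lt hw).
exists v; split => //.
case: (ltngtP (M v) (mon v)) => // [hgt|heq]; last by rewrite heq eqxx in hv.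
exfalso.
have split_eq : forall (P : pred 'I_N), (\sum_(k | P k) M k = \sum_(k | P k) mon k)%N ->
   exists k, [/\ P k, ~~ lt k v, k != v & (0 < mon k)%N] \/ ~~ P v.
  move=> P hP.
  have [Pv|nPv] := boolP (P v); last by exists v; right.
  move: hP; rewrite (bigID (fun k => lt k v)) [X in _ = X](bigID (fun k => lt k v)) /=.
  rewrite (eq_bigr (fun k => mon k)); last by move=> k /andP [_ /hbelow].
  move/eqP; rewrite eqn_add2l.
  rewrite (bigD1 v) /=; last by rewrite Pv lt_irr.
  rewrite [X in _ == X](bigD1 v) /=; last by rewrite Pv lt_irr.
  move=> /eqP h.
  move: h; set S1 := (\sum_(i | _) M i)%N; set S2 := (\sum_(i | _) mon i)%N => h.
  have : (0 < S2)%N by lia.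
  move=> /sum_pos [k [/andP [/andP [h1 h2] h3] h4]]; exists k; left; split => //.
have [a [[/eqP ra la av pa]|]] := split_eq (fun k => (cell k).1 == (cell v).1) (hr _); last by rewrite eqxx.
have [b [[/eqP cb lb bv pb]|]] := split_eq (fun k => (cell k).2 == (cell v).2) (hc _); last by rewrite eqxx.
have ca : (cell a).2 != (cell v).2.
  by apply/negP => /eqP h; move/eqP: av; apply; apply: cell_eq.
have rb : (cell b).1 != (cell v).1.
  by apply/negP => /eqP h; move/eqP: bv; apply; apply: cell_eq.
have hab1 : (cell a).1 != (cell b).1 by rewrite ra eq_sym.
have hab2 : (cell a).2 != (cell b).2 by rewrite cb.
have [_ hZ2 hl] := hs a b pa pb hab1 hab2.
have [k2 hk2] := Xe_ex hZ2.
have hv1 : cell v = ((cell a).1, (cell b).2) by rewrite ra cb -surjective_pairing.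
have := hl v k2 hv1 hk2.
by rewrite (negbTE la) (negbTE lb).
Qed.

Local Notation gt := (degrevlex lt).
Local Notation P := {mpoly CC[N]}.

Lemma gt_asym A B : gt A B -> gt B A -> False.
Proof.
case=> [h1|[e1 [v [hv1 hv2]]]]; case=> [h2|[e2 [w [hw1 hw2]]]].
- by move: (ltn_trans h1 h2); rewrite ltnn.
- by move: h1; rewrite e2 ltnn.
- by move: h2; rewrite e1 ltnn.
have [vw|vw] := eqVneq v w.
  by subst w; move: (ltn_trans hv1 hw1); rewrite ltnn.
case/orP: (lt_tot vw) => h.
  by move: hv1; rewrite (hw2 _ h) ltnn.
by rewrite (hv2 _ h) ltnn in hw1.
Qed.

Lemma init_mono (g : P) A : (g = 'X_[A] \/ g = - 'X_[A]) -> is_initial gt g A.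
Proof.
move=> hg; split.
  by rewrite mcoeff_msupp; case: hg => ->; rewrite ?mcoeffN mcoeffX eqxx ?oppr_eq0 oner_neq0.
move=> m'; rewrite mcoeff_msupp => h hne; exfalso; move: h.
by case: hg => ->; rewrite ?mcoeffN mcoeffX (eq_sym A m') (negbTE hne) ?oppr0 eqxx.
Qed.

Lemma init_bin (g : P) A B : A != B -> gt A B ->
  (g = 'X_[A] - 'X_[B] \/ g = 'X_[B] - 'X_[A]) -> is_initial gt g A.
Proof.
move=> hAB hgt hg; split.
  rewrite mcoeff_msupp; case: hg => ->; rewrite mcoeffB !mcoeffX eqxx (eq_sym B A) (negbTE hAB).
    by rewrite subr0 oner_neq0.
  by rewrite sub0r oppr_eq0 oner_neq0.
move=> m'; rewrite mcoeff_msupp => h hne.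
have [->|hB] := eqVneq m' B => //.
exfalso; move: h.
by case: hg => ->; rewrite mcoeffB !mcoeffX (eq_sym A m') (negbTE hne) (eq_sym B m') (negbTE hB) subrr eqxx.
Qed.

Lemma not_gt_lt (a b c d : 'I_N) : c != a -> c != b -> d != a -> d != b -> c != d ->
  ~ gt (U_(a) + U_(b))%MM (U_(c) + U_(d))%MM ->
  (lt a c && lt a d) || (lt b c && lt b d).
Proof.
move=> ca cb da db cd hng; apply: NNPP => hno; apply: hng; right; split.
  by rewrite !mdegD !mdeg1.
have [u [hu hc hd]] : exists u, [/\ (u == c) || (u == d), (u == c) || lt u c & (u == d) || lt u d].
  case/orP: (lt_tot cd) => h.
    by exists c; rewrite eqxx h orbT.
  by exists d; rewrite eqxx h orbT.
have lua : forall x, x != c -> x != d -> ~~ ((lt x c) && (lt x d)) -> lt u x.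
  move=> x xc xd hx.
  have ux : u != x.
    by apply/eqP => e; subst u; move: hu; rewrite (negbTE xc) (negbTE xd).
  case/orP: (lt_tot ux) => // h; exfalso; move/negP: hx; apply.
  apply/andP; split.
    by case/orP: hc => [/eqP <- //|]; apply: lt_trans.
  by case/orP: hd => [/eqP <- //|]; apply: lt_trans.
have hua : lt u a.
  by apply: lua; rewrite 1?eq_sym //; apply/negP => h; apply: hno; rewrite h.
have hub : lt u b.
  by apply: lua; rewrite 1?eq_sym //; apply/negP => h; apply: hno; rewrite h orbT.
have uab : (u != a) && (u != b).
  by apply/andP; split; apply/eqP => e; subst u; [move: hua|move: hub]; rewrite (negbTE (lt_irr _)).
case/andP: uab => ua ub.
exists u; split.
  rewrite !mnmDE !mnm1E (eq_sym a) (eq_sym b) (negbTE ua) (negbTE ub) /=.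
  by case/orP: hu => /eqP ->; rewrite eqxx ?addn1 ?add1n.
move=> w hw.
have wne : forall x, lt u x -> w != x.
  move=> x hx; apply/eqP => e; subst x.
  by move: (lt_trans hw hx); rewrite (negbTE (lt_irr _)).
have wne' : forall x, (u == x) || lt u x -> w != x.
  move=> x /orP [/eqP <-|hx]; last exact: wne.
  by apply/eqP => e; subst w; move: hw; rewrite (negbTE (lt_irr _)).
rewrite !mnmDE !mnm1E.
by rewrite (eq_sym a) (eq_sym b) (eq_sym c) (eq_sym d) (negbTE (wne _ hua)) (negbTE (wne _ hub))
  (negbTE (wne' _ hc)) (negbTE (wne' _ hd)).
Qed.

Definition noinit (mon : 'X_{1..N}) :=
  forall g mg, minors2 Z g -> is_initial gt g mg -> ~ (mg <= mon)%MM.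

Definition stdc (a b : 'I_N) :=
  [/\ ((cell a).1, (cell b).2) \notin Z, ((cell b).1, (cell a).2) \notin Z &
  forall k1 k2, cell k1 = ((cell a).1, (cell b).2) -> cell k2 = ((cell b).1,(cell a).2) ->
     (lt a k1 && lt a k2) || (lt b k1 && lt b k2)].

Lemma core mon a b : noinit mon -> (0 < mon a)%N -> (0 < mon b)%N ->
  (cell a).1 != (cell b).1 -> (cell a).2 != (cell b).2 ->
  (exists g, minors2 Z g /\
     (g = 'X_a * 'X_b - Xentry Z (cell a).1 (cell b).2 * Xentry Z (cell b).1 (cell a).2 \/
      g = Xentry Z (cell a).1 (cell b).2 * Xentry Z (cell b).1 (cell a).2 - 'X_a * 'X_b)) ->
  stdc a b.
Proof.
move=> H pa pb r12 c12 [g [hg hgE]].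
have ab : a != b by apply/eqP => e; move: r12; rewrite e eqxx.
have hP : ('X_a * 'X_b : P) = 'X_[U_(a) + U_(b)] by rewrite mpolyXD.
have hle : (U_(a) + U_(b) <= mon)%MM.
  apply/mnm_lepP => k; rewrite mnmDE !mnm1E.
  have [<-|ka] := eqVneq a k; first by rewrite eq_sym (negbTE ab).
  by have [<-|kb] := eqVneq b k.
set p := ((cell a).1, (cell b).2); set q := ((cell b).1, (cell a).2).
have hp : Xentry Z (cell a).1 (cell b).2 = Xentry Z p.1 p.2 by [].
have hq : Xentry Z (cell b).1 (cell a).2 = Xentry Z q.1 q.2 by [].
have monoc : (p \in Z) || (q \in Z) -> False.
  move=> hpq; apply: (H g _ hg _ hle); apply: init_mono.
  have hQ : Xentry Z (cell a).1 (cell b).2 * Xentry Z (cell b).1 (cell a).2 = 0.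
    by rewrite hp hq; case/orP: hpq => /Xe_Z ->; rewrite ?mul0r ?mulr0.
  by rewrite -hP; case: hgE => ->; rewrite hQ ?subr0 ?sub0r; [left|right].
have hpZ : p \notin Z by apply/negP => h; apply: monoc; rewrite h.
have hqZ : q \notin Z by apply/negP => h; apply: monoc; rewrite h orbT.
have [c hc] := Xe_ex hpZ; have [d hd] := Xe_ex hqZ.
have hQ : Xentry Z (cell a).1 (cell b).2 * Xentry Z (cell b).1 (cell a).2 = 'X_[U_(c) + U_(d)].
  by rewrite hp hq -hc -hd !Xe_cell mpolyXD.
have ca : c != a by apply/eqP => e; move: c12; rewrite -e hc eqxx.
have cb : c != b by apply/eqP => e; move: r12; rewrite -e hc eqxx.
have da : d != a by apply/eqP => e; move: r12; rewrite -e hd eqxx.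
have db : d != b by apply/eqP => e; move: c12; rewrite -e hd eqxx.
have cd : c != d by apply/eqP => e; move: r12; have := f_equal fst hc; have := f_equal fst hd; rewrite e /= => -> ->; rewrite eqxx.
have hAB : (U_(a) + U_(b) != U_(c) + U_(d))%MM.
  apply/eqP => /mnmP /(_ c); rewrite !mnmDE !mnm1E eqxx.
  by rewrite (eq_sym a) (eq_sym b) (negbTE ca) (negbTE cb).
have ngt : ~ gt (U_(a) + U_(b))%MM (U_(c) + U_(d))%MM.
  move=> hgt; apply: (H g _ hg _ hle); apply: init_bin hAB hgt _.
  by rewrite -hP -hQ.
have hl := not_gt_lt ca cb da db cd ngt.
split => // k1 k2 h1 h2.
by rewrite (cell_inj (etrans h1 (esym hc))) (cell_inj (etrans h2 (esym hd))).
Qed.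

Lemma minor_ex (a b : 'I_N) : ((cell a).1 < (cell b).1)%N -> (cell a).2 != (cell b).2 ->
  exists g, minors2 Z g /\
     (g = 'X_a * 'X_b - Xentry Z (cell a).1 (cell b).2 * Xentry Z (cell b).1 (cell a).2 \/
      g = Xentry Z (cell a).1 (cell b).2 * Xentry Z (cell b).1 (cell a).2 - 'X_a * 'X_b).
Proof.
move=> hr hc; case: (ltngtP (cell a).2 (cell b).2) => h.
- exists (Xentry Z (cell a).1 (cell a).2 * Xentry Z (cell b).1 (cell b).2
     - Xentry Z (cell a).1 (cell b).2 * Xentry Z (cell b).1 (cell a).2).
  split; last by left; rewrite !Xe_cell.
  by exists (cell a).1, (cell b).1, (cell a).2, (cell b).2; split; [|split].
- exists (Xentry Z (cell a).1 (cell b).2 * Xentry Z (cell b).1 (cell a).2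
     - Xentry Z (cell a).1 (cell a).2 * Xentry Z (cell b).1 (cell b).2).
  split; last by right; rewrite !Xe_cell.
  by exists (cell a).1, (cell b).1, (cell b).2, (cell a).2; split; [|split].
- by move: hc; rewrite (val_inj h) eqxx.
Qed.

Lemma std_of mon : noinit mon -> std mon.
Proof.
move=> H a b pa pb r12 c12.
case: (ltngtP (cell a).1 (cell b).1) => h.
- exact: core H pa pb r12 c12 (minor_ex h c12).
- rewrite eq_sym in r12; rewrite eq_sym in c12.
  have [h1 h2 h3] := core H pb pa r12 c12 (minor_ex h c12).
  split; [exact: h2|exact: h1|move=> k1 k2 e1 e2]; have := h3 k2 k1 e2 e1; by case/orP => /andP [x y]; apply/orP; [right|left]; apply/andP.
- by move: r12; rewrite (val_inj h) eqxx.
Qed.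

Section Phi.
Variable mon : 'X_{1..N}.
Hypothesis hstd : std mon.

Definition inF (M : 'X_{1..N}) := [&& mdeg M == mdeg mon,
   [forall i, rsum M i == rsum mon i] & [forall j, csum M j == csum mon j]].

Definition phi (p : P) : CC :=
  \sum_(M : 'X_{1..N < (mdeg mon).+1}) (if inF M then p@_M else 0).

Lemma phiD p q : phi (p + q) = phi p + phi q.
Proof. rewrite /phi -big_split /=; apply: eq_bigr => M _; case: ifP => _; first by rewrite mcoeffD. by rewrite addr0. Qed.
Lemma phi0 : phi 0 = 0.
Proof. by rewrite /phi big1 // => M _; case: ifP; rewrite ?mcoeff0. Qed.
Lemma phiZ c p : phi (c *: p) = c * phi p.
Proof. by rewrite /phi mulr_sumr; apply: eq_bigr => M _; case: ifP; rewrite ?mcoeffZ ?mulr0. Qed.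
Lemma phiN p : phi (- p) = - phi p.
Proof. by rewrite -scaleN1r phiZ mulN1r. Qed.
Lemma phiB p q : phi (p - q) = phi p - phi q.
Proof. by rewrite phiD phiN. Qed.
Lemma phi_sum (I : Type) (s : seq I) (F : I -> P) :
  phi (\sum_(x <- s) F x) = \sum_(x <- s) phi (F x).
Proof. exact: (big_morph phi phiD phi0). Qed.

Lemma phiX M0 : phi 'X_[M0] = (inF M0 : nat)%:R.
Proof.
case: (boolP (inF M0)) => h.
  have hb : (mdeg M0 < (mdeg mon).+1)%N.
    by case/and3P: h => /eqP ->.
  rewrite /phi (bigD1 (BMultinom hb)) //= h mcoeffX eqxx big1 ?addr0 // => M hM.
  case: ifP => // _; rewrite mcoeffX.
  suff -> : (M0 == M) = false by [].
  apply/negP => /eqP e; move/eqP: hM; apply; apply: val_inj; by rewrite /= e.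
rewrite /phi big1 // => M _; case: ifP => // hM; rewrite mcoeffX.
suff -> : (M0 == M) = false by [].
by apply/negP => /eqP e; move: h; rewrite e hM.
Qed.

Lemma rsumD M1 M2 i : rsum (M1 + M2) i = (rsum M1 i + rsum M2 i)%N.
Proof. by rewrite /rsum -big_split; apply: eq_bigr => k _; rewrite mnmDE. Qed.
Lemma csumD M1 M2 i : csum (M1 + M2) i = (csum M1 i + csum M2 i)%N.
Proof. by rewrite /csum -big_split; apply: eq_bigr => k _; rewrite mnmDE. Qed.
Lemma rsum1 k i : rsum U_(k)%MM i = ((cell k).1 == i).
Proof.
rewrite /rsum big_mkcond /= (bigD1 k) //= mnm1E eqxx big1 ?addn0 => [|k' hk'].
  by case: ifP.
by case: ifP => // _; rewrite mnm1E eq_sym (negbTE hk').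
Qed.
Lemma csum1 k i : csum U_(k)%MM i = ((cell k).2 == i).
Proof.
rewrite /csum big_mkcond /= (bigD1 k) //= mnm1E eqxx big1 ?addn0 => [|k' hk'].
  by case: ifP.
by case: ifP => // _; rewrite mnm1E eq_sym (negbTE hk').
Qed.

Lemma rsum_ge (M : 'X_{1..N}) (k : 'I_N) : (M k <= rsum M (cell k).1)%N.
Proof. by rewrite /rsum (bigD1 k) //= leq_addr. Qed.
Lemma csum_ge (M : 'X_{1..N}) (k : 'I_N) : (M k <= csum M (cell k).2)%N.
Proof. by rewrite /csum (bigD1 k) //= leq_addr. Qed.

Lemma inF_good (M : 'X_{1..N}) (k k' : 'I_N) : inF M -> (0 < M k)%N -> (0 < M k')%N -> ((cell k).1, (cell k').2) \notin Z.
Proof.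
case/and3P => _ /forallP hr /forallP hc pk pk'.
apply: (good hstd).
  by rewrite -(eqP (hr _)); apply: leq_trans pk (rsum_ge _ _).
by rewrite -(eqP (hc _)); apply: leq_trans pk' (csum_ge _ _).
Qed.

Lemma blocked (u : 'X_{1..N}) (k k' : 'I_N) : inF (u + (U_(k) + U_(k')))%MM ->
  ((cell k).1, (cell k').2) \notin Z /\ ((cell k').1, (cell k).2) \notin Z.
Proof.
move=> h.
have pk : (0 < (u + (U_(k) + U_(k')))%MM k)%N by rewrite !mnmDE mnm1E eqxx; lia.
have pk' : (0 < (u + (U_(k) + U_(k')))%MM k')%N by rewrite !mnmDE (mnm1E k') eqxx; lia.
by split; apply: inF_good h _ _.
Qed.

Lemma inF_congr (M M' : 'X_{1..N}) : mdeg M = mdeg M' -> (forall i, rsum M i = rsum M' i) ->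
  (forall j, csum M j = csum M' j) -> inF M = inF M'.
Proof.
move=> hd hr hc; rewrite /inF hd; congr [&& _, _ & _]; apply: eq_forallb => x.
  by rewrite hr. by rewrite hc.
Qed.

Lemma Xe_or (p : 'I_m * 'I_n) :
  (p \in Z /\ Xentry Z p.1 p.2 = 0) \/ (exists k, cell k = p /\ Xentry Z p.1 p.2 = 'X_k).
Proof.
case: (boolP (p \in Z)) => h; first by left; rewrite Xe_Z.
by right; have [k hk] := Xe_ex h; exists k; rewrite -hk Xe_cell.
Qed.

Lemma phi_minor (u : 'X_{1..N}) (i1 i2 : 'I_m) (j1 j2 : 'I_n) :
  phi ('X_[u] * (Xentry Z i1 j1 * Xentry Z i2 j2 - Xentry Z i1 j2 * Xentry Z i2 j1)) = 0.
Proof.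
have key : forall k1 k2 : 'I_N, phi ('X_[u] * ('X_k1 * 'X_k2)) = (inF (u + (U_(k1) + U_(k2)))%MM : nat)%:R.
  by move=> k1 k2; rewrite -!mpolyXD phiX.
rewrite mulrBr phiB.
have T1 : (Xentry Z i1 j1 * Xentry Z i2 j2 = 0 /\ ((i1, j1) \in Z \/ (i2, j2) \in Z)) \/
    exists k1 k2, [/\ cell k1 = (i1, j1), cell k2 = (i2, j2) & Xentry Z i1 j1 * Xentry Z i2 j2 = 'X_k1 * 'X_k2].
  case: (Xe_or (i1, j1)) => [[h1 e1]|[k1 [h1 e1]]] /=; first by left; rewrite /= in e1; rewrite e1 mul0r; split => //; left.
  case: (Xe_or (i2, j2)) => [[h2 e2]|[k2 [h2 e2]]] /=; first by left; rewrite /= in e2; rewrite e2 mulr0; split => //; right.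
  by right; exists k1, k2; split => //; rewrite /= in e1 e2; rewrite e1 e2.
have T2 : (Xentry Z i1 j2 * Xentry Z i2 j1 = 0 /\ ((i1, j2) \in Z \/ (i2, j1) \in Z)) \/
    exists k1 k2, [/\ cell k1 = (i1, j2), cell k2 = (i2, j1) & Xentry Z i1 j2 * Xentry Z i2 j1 = 'X_k1 * 'X_k2].
  case: (Xe_or (i1, j2)) => [[h1 e1]|[k1 [h1 e1]]] /=; first by left; rewrite /= in e1; rewrite e1 mul0r; split => //; left.
  case: (Xe_or (i2, j1)) => [[h2 e2]|[k2 [h2 e2]]] /=; first by left; rewrite /= in e2; rewrite e2 mulr0; split => //; right.
  by right; exists k1, k2; split => //; rewrite /= in e1 e2; rewrite e1 e2.
case: T1 => [[e1 z1]|[k1 [k2 [c1 c2 e1]]]]; case: T2 => [[e2 z2]|[k3 [k4 [c3 c4 e2]]]].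
- by rewrite e1 e2 !mulr0 phi0 subrr.
- rewrite e1 e2 mulr0 phi0 key.
  case: (boolP (inF _)) => h; last by rewrite subrr.
  have [b1 b2] := blocked h; exfalso; move: b1 b2; rewrite c3 c4 /=.
  by case: z1 => ->.
- rewrite e1 e2 mulr0 phi0 key.
  case: (boolP (inF _)) => h; last by rewrite subrr.
  have [b1 b2] := blocked h; exfalso; move: b1 b2; rewrite c1 c2 /=.
  by case: z2 => ->.
- rewrite e1 e2 !key.
  rewrite (@inF_congr (u + (U_(k1) + U_(k2)))%MM (u + (U_(k3) + U_(k4)))%MM) ?subrr //.
  + by rewrite !mdegD !mdeg1.
  + by move=> i; rewrite !rsumD !rsum1 c1 c2 c3 c4.
  + by move=> j; rewrite !csumD !csum1 c1 c2 c3 c4 /=; lia.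
Qed.

Lemma phi_ideal f : ideal_gen (minors2 Z) f -> phi f = 0.
Proof.
case=> s [hs ->]; rewrite phi_sum big_seq big1 // => c hc.
have [i1 [i2 [j1 [j2 [_ [_ ->]]]]]] := hs c hc.
rewrite [c.1]mpolyE mulr_suml phi_sum big1 // => u _.
by rewrite -scalerAl phiZ phi_minor mulr0.
Qed.

Lemma phi_init f : is_initial gt f mon -> phi f = f@_mon.
Proof.
case=> hin hmax.
have hb : (mdeg mon < (mdeg mon).+1)%N by [].
have hinF : inF mon.
  by rewrite /inF eqxx /=; apply/andP; split; apply/forallP => x; rewrite eqxx.
rewrite /phi (bigD1 (BMultinom hb)) //= hinF big1 ?addr0 // => M hM.
case: ifP => // hMF; apply/eqP; apply: NNPP => hne.
have hMs : (M : 'X_{1..N}) \in msupp f by rewrite mcoeff_msupp; apply/negP.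
have hMmon : (M : 'X_{1..N}) != mon.
  by apply/negP => /eqP e; move/eqP: hM; apply; apply: val_inj.
have g1 := hmax _ hMs hMmon.
case/and3P: hMF => /eqP hd /forallP hr /forallP hc.
have [v [hv1 hv2]] := minimal hstd (fun i => eqP (hr i)) (fun j => eqP (hc j)) hMmon.
by apply: (gt_asym g1); right; split => //; exists v.
Qed.

End Phi.

Lemma main_contra f mon : ideal_gen (minors2 Z) f -> is_initial gt f mon -> noinit mon -> False.
Proof.
move=> hI hin H; have hs := std_of H.
have := phi_ideal hs hI; rewrite (phi_init hs hin).
case: hin => h _; move: h; rewrite mcoeff_msupp => h e.
by rewrite e eqxx in h.
Qed.

Lemma groebner : is_groebner gt (minors2 Z) (ideal_gen (minors2 Z)).
Proof.
move=> h; split.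
- case=> s [hs ->]; apply: ideal_gen_sum => c hc.
  have [f [mon [hf [hin ->]]]] := hs c hc.
  have [g [mg [hg [hgi hle]]]] : exists g mg, minors2 Z g /\ is_initial gt g mg /\ (mg <= mon)%MM.
    apply: NNPP => hno; apply: (main_contra hf hin) => g mg hg hgi hle; apply: hno; by exists g, mg.
  exists [:: ('X_[mon - mg], 'X_[mg])]; split.
    by move=> d; rewrite inE => /eqP -> /=; exists g, mg.
  by rewrite big_seq1 /= -mpolyXD submK.
- case=> s [hs ->]; exists s; split => // c hc.
  have [g [mg [hg [hgi ->]]]] := hs c hc.
  exists g, mg; split; last by split.
  exists [:: (1, g)]; split; first by move=> d; rewrite inE => /eqP ->.
  by rewrite big_seq1 mul1r.
Qed.

End S.

Theorem theorem5p5 (m n : nat) (hm : (0 < m)%N) (hn : (0 < n)%N)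
  (Z : {set 'I_m * 'I_n}) (lt : rel 'I_(nvars Z)) :
  strict_total lt ->
  is_groebner (degrevlex lt) (minors2 Z) (ideal_gen (minors2 Z)).
Proof. move=> H; exact: (groebner hm hn H). Qed.
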